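(* A query $Q$ is hierarchical if and only if its multivariate extension $\widehat Q$ is acyclic (i.e., every component $\widehat Q_\sigma$ of $\widehat Q$ is $\alpha$-acyclic).
   Context: A query is a full conjunctive query $Q = R_1(\mathbf X_1)\wedge\cdots\wedge R_k(\mathbf X_k)$. For a variable $X$, $\mathrm{at}(X)$ is the set of atoms whose schema contains $X$. $Q$ is hierarchical if for any two variables $X,Y$, either $\mathrm{at}(X)\subseteq\mathrm{at}(Y)$, or $\mathrm{at}(Y)\subseteq\mathrm{at}(X)$, or $\mathrm{at}(X)\cap\mathrm{at}(Y)=\emptyset$. A query is ($\alpha$-)acyclic if it has a join tree: a tree whose nodes are its atoms such that, for every variable, the atoms containing it form a connected subtree. Multivariate extension: take fresh variables $Z_1,\dots,Z_k$. For a permutation $\sigma$ of $[k]$, the component $\widehat Q_\sigma$ replaces each atom $R_{\sigma_i}(\mathbf X_{\sigma_i})$ by $\widehat R_{\sigma_i}(Z_1,\dots,Z_i,\mathbf X_{\sigma_i})$; $\widehat Q$ is the union of all $k!$ components, and it is called acyclic when each component is. *)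

(* Defs.v *)
From mathcomp Require Import all_boot all_order all_fingroup.
Set Implicit Arguments. Unset Strict Implicit. Unset Printing Implicit Defensive.

(* A full conjunctive query with k atoms R_1(X_1) /\ ... /\ R_k(X_k) over a
   finite type V of variables is represented by its atom schemas
   X : 'I_k -> {set V} (atom i has schema X i).  Atoms are identified by
   their index, so repeated relation symbols (self-joins) are allowed; the
   relation symbols play no role in hierarchicity or acyclicity. *)

Definition atoms_of (V : finType) (k : nat) (X : 'I_k -> {set V}) (x : V)
  : {set 'I_k} := [set i | x \in X i].

Definition hierarchical (V : finType) (k : nat) (X : 'I_k -> {set V}) : Prop :=
  forall x y : V,
    [|| atoms_of X x \subset atoms_of X y,
        atoms_of X y \subset atoms_of X x
      | [disjoint atoms_of X x & atoms_of X y]].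

(* A (simple, undirected) tree on the finite node set T: a symmetric,
   irreflexive, connected relation with exactly #|T| - 1 edges
   (each edge counted as two ordered pairs). *)
Definition is_tree (T : finType) (e : rel T) : Prop :=
  symmetric e /\ irreflexive e /\ (forall a b : T, connect e a b) /\
  #|[set p : T * T | e p.1 p.2]| = (#|T| - 1).*2.

Definition restr_rel (T : finType) (e : rel T) (S : {set T}) : rel T :=
  [rel a b | [&& e a b, a \in S & b \in S]].

Definition connected_in (T : finType) (e : rel T) (S : {set T}) : Prop :=
  forall a b, a \in S -> b \in S -> connect (restr_rel e S) a b.

(* alpha-acyclicity: existence of a join tree whose nodes are the atoms *)
Definition acyclic (V : finType) (k : nat) (X : 'I_k -> {set V}) : Prop :=
  exists e : rel 'I_k,
    is_tree e /\ forall x : V, connected_in e (atoms_of X x).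

(* Variables of the extension are V + 'I_k, where
   inr j stands for the fresh variable Z_{j+1}.  In the component Q_sigma,
   the atom at position i (0-based, i.e. position i+1 in the paper) is
   R_{sigma i}(Z_1,...,Z_{i+1}, X_{sigma i}). *)
Definition ext_component (V : finType) (k : nat) (X : 'I_k -> {set V})
  (s : {perm 'I_k}) : 'I_k -> {set (V + 'I_k)%type} :=
  fun i => [set inr z | z : 'I_k & (z <= i)%N] :|: [set inl x | x in X (s i)].

Definition ext_acyclic (V : finType) (k : nat) (X : 'I_k -> {set V}) : Prop :=
  forall s : {perm 'I_k}, acyclic (ext_component X s).

(* Main.v *)
Require Import Defs.
From mathcomp Require Import all_boot all_order all_fingroup.
From mathcomp Require Import zify.
Set Implicit Arguments. Unset Strict Implicit. Unset Printing Implicit Defensive.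


Definition nbstep (T : finType) (e : rel T) (N : {set T}) : {set T} :=
  N :|: [set y | [exists x in N, e x y]].

Lemma nbstep_sub (T : finType) (e : rel T) (N : {set T}) : N \subset nbstep e N.
Proof. exact: subsetUl. Qed.

Lemma iter_nb_mono (T : finType) (e : rel T) (N : {set T}) m1 m2 : (m1 <= m2)%N ->
  iter m1 (nbstep e) N \subset iter m2 (nbstep e) N.
Proof.
move=> /subnK <-; elim: (m2 - m1)%N => [|d IH]; first by rewrite add0n.
rewrite addSn /=; exact: subset_trans IH (nbstep_sub _ _).
Qed.

Lemma path_nb (T : finType) (e : rel T) (N : {set T}) t : forall x m,
  x \in iter m (nbstep e) N -> path e x t ->
  last x t \in iter (m + size t) (nbstep e) N.
Proof.
elim: t => [|y t IH] x m Hx /=; first by rewrite addn0.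
case/andP=> Hxy Hp.
have Hy : y \in iter m.+1 (nbstep e) N.
  rewrite /= /nbstep !inE; apply/orP; right; apply/existsP; exists x.
  by rewrite Hx.
by rewrite addnS -addSn; apply: IH.
Qed.

Lemma conn_count (T : finType) (e : rel T) (r : T) :
  symmetric e -> (forall a, connect e r a) ->
  ((#|T| - 1).*2 <= #|[set p : T * T | e p.1 p.2]|)%N.
Proof.
move=> esym conn.
have H a : exists m, a \in iter m (nbstep e) [set r].
  have /connectP[t Ht ->] := conn a.
  exists (0 + size t)%N; apply: path_nb => //=; exact: set11.
pose f a := ex_minn (H a).
have Hp a : a != r -> exists x, e x a && (f x < f a)%N.
  move=> Har; rewrite /f; case: ex_minnP => m Hm Hmin.
  case: m Hm Hmin => [|m] Hm Hmin; first by move: Hm; rewrite /= inE (negPf Har).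
  have Hnm : a \notin iter m (nbstep e) [set r].
    by apply/negP => /Hmin; rewrite ltnn.
  move: Hm; rewrite /= {1}/nbstep inE (negPf Hnm) /= inE => /existsP[x /andP[Hx Hxa]].
  exists x; rewrite Hxa /=.
  case: ex_minnP => m' _ Hmin'.
  by apply: leq_ltn_trans (Hmin' _ Hx) _.
pose p a := odflt r [pick x | e x a && (f x < f a)%N].
have Pp a : a != r -> e (p a) a && (f (p a) < f a)%N.
  move=> Har; rewrite /p; case: pickP => [x -> //|Hn].
  by have [x Hx] := Hp a Har; rewrite Hn in Hx.
pose D := [set~ r].
pose A := [set (p a, a) | a in D].
pose B := [set (a, p a) | a in D].
have cA : #|A| = (#|T| - 1)%N.
  rewrite card_imset ?cardsC1 ?subn1 // => a b [] //.
have cB : #|B| = (#|T| - 1)%N.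
  rewrite card_imset ?cardsC1 ?subn1 // => a b [] //.
have AB0 : A :&: B = set0.
  apply/setP => q; rewrite !inE; apply/negP => /andP[/imsetP[a Ha ->] /imsetP[b Hb [E1 E2]]].
  rewrite !inE in Ha Hb.
  have /andP[_ h1] := Pp a Ha; have /andP[_ h2] := Pp b Hb.
  rewrite E1 in h1; rewrite -E2 in h2.
  by have := ltn_trans h1 h2; rewrite ltnn.
have sub : A :|: B \subset [set q : T * T | e q.1 q.2].
  apply/subsetP => q; rewrite !inE => /orP[] /imsetP[a Ha ->]; rewrite !inE in Ha;
    have /andP[h _] := Pp a Ha => //=.
  by rewrite esym.
have := subset_leq_card sub.
have := cardsUI A B; rewrite AB0 cards0 addn0 cA cB addnn => ->.
done.
Qed.

Lemma tree_no_cycle (T : finType) (e : rel T) (u v c : T) (Px Py : {set T}) :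
  is_tree e -> u != v -> e u v ->
  connect (restr_rel e Px) c u -> v \notin Px ->
  connect (restr_rel e Py) c v -> u \notin Py -> False.
Proof.
move=> [esym [eirr [econn ecard]]] uv euv cu vPx cv uPy.
pose bad a b := ((a == u) && (b == v)) || ((a == v) && (b == u)).
pose e' : rel T := fun a b => e a b && ~~ bad a b.
have e'sym : symmetric e'.
  move=> a b; rewrite /e' /= esym /bad.
  by rewrite (andbC (b == u)) (andbC (b == v)) orbC.
have sub1 (S : {set T}) : (v \notin S) || (u \notin S) -> subrel (restr_rel e S) (connect e').
  move=> wS a b /= /and3P[eab aS bS]; apply: connect1; rewrite /e' /= eab /= /bad.
  apply/negP => /orP[] /andP[/eqP ea /eqP eb]; rewrite ea eb in aS bS;
    by rewrite aS bS in wS.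
have c'u : connect e' c u by apply: (connect_sub (sub1 Px _)) cu; rewrite vPx.
have c'v : connect e' c v by apply: (connect_sub (sub1 Py _)) cv; rewrite uPy orbT.
have uv' : connect e' u v.
  by apply: connect_trans c'v; rewrite (sym_connect_sym e'sym).
have all' : forall a, connect e' u a.
  move=> a; apply: connect_sub (econn u a) => x y exy.
  case Hb: (bad x y); last by apply: connect1; rewrite /e' /= exy Hb.
  case/orP: Hb => /andP[/eqP -> /eqP ->] //.
  by rewrite (sym_connect_sym e'sym).
have := conn_count e'sym all'.
have sub : [set q : T * T | e' q.1 q.2] :|: [set (u, v); (v, u)] \subset
           [set q : T * T | e q.1 q.2].
  apply/subsetP => q; rewrite !inE => /orP[/andP[-> _] //|/orP[] /eqP -> /=] //.
  by rewrite esym.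
have := subset_leq_card sub.
have := cardsUI [set q : T * T | e' q.1 q.2] [set (u, v); (v, u)].
have -> : [set q : T * T | e' q.1 q.2] :&: [set (u, v); (v, u)] = set0.
  apply/setP => q; rewrite !inE; apply/negP => /andP[/andP[_ Hb] /orP[] /eqP Hq];
    by subst; rewrite /bad !eqxx ?orbT in Hb.
rewrite cards0 addn0 cards2.
have -> : ((u, v) != (v, u)) by rewrite xpair_eqE negb_and uv.
rewrite ecard => -> Hle Hge.
have := leq_trans Hle Hge.
by rewrite -{2}(addn0 #|_|) leq_add2l.
Qed.


Lemma ext_inl (V : finType) (k : nat) (X : 'I_k -> {set V}) s i x :
  (inl x \in ext_component X s i) = (x \in X (s i)).
Proof.
rewrite /ext_component inE mem_imset; last by move=> ? ? [].
apply/idP/idP => [/orP[/imsetP[? _ //]|//]|->]; by rewrite orbT.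
Qed.

Lemma ext_inr (V : finType) (k : nat) (X : 'I_k -> {set V}) s i z :
  (inr z \in ext_component X s i) = (z <= i)%N.
Proof.
rewrite /ext_component inE mem_imset; last by move=> ? ? [].
rewrite inE; apply/idP/idP => [/orP[//|/imsetP[? _ //]]|->] //.
Qed.

Lemma at_inl (V : finType) (k : nat) (X : 'I_k -> {set V}) s i x :
  (i \in atoms_of (ext_component X s) (inl x)) = (x \in X (s i)).
Proof. by rewrite /atoms_of inE ext_inl. Qed.

Lemma at_inr (V : finType) (k : nat) (X : 'I_k -> {set V}) s i z :
  (i \in atoms_of (ext_component X s) (inr z)) = (z <= i)%N.
Proof. by rewrite /atoms_of inE ext_inr. Qed.

Lemma backward (V : finType) (k : nat) (X : 'I_k -> {set V}) :
  ext_acyclic X -> hierarchical X.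
Proof.
move=> Hac x y; apply/negPn/negP => Hn.
rewrite !negb_or disjoint_subset in Hn.
case/and3P: Hn => /subsetPn[a ax ay] /subsetPn[b bY bx] /subsetPn[c cx cy].
rewrite /atoms_of !inE in ax ay bY bx cx cy.
rewrite negbK in cy.
have ab : a != b by apply/eqP => E; rewrite E in ax; rewrite ax in bx.
have k2 : (1 < k)%N.
  case: a b ab {ax ay bY bx} => [a Ha] [b Hb] /= ab.
  have : a != b by apply: contra ab => /eqP E; apply/eqP/val_inj.
  lia.
have Hu : (k - 2 < k)%N by lia.
have Hv : (k - 1 < k)%N by lia.
pose u := Ordinal Hu. pose v := Ordinal Hv.
have uv : u != v by apply/eqP => /(congr1 val) /=; lia.
pose w := tperm u a v.
have wa : w != a.
  apply/eqP => E; have : tperm u a v = tperm u a u by rewrite tpermL.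
  by move/perm_inj => E2; rewrite E2 eqxx in uv.
pose s := (tperm u a * tperm w b)%g.
have su : s u = a by rewrite permM tpermL tpermD // eq_sym.
have sv : s v = b by rewrite permM tpermL.
have [e [Htree Hconn]] := Hac s.
have euv : e u v.
  have Hu' : u \in atoms_of (ext_component X s) (inr u) by rewrite inE ext_inr.
  have Hv' : v \in atoms_of (ext_component X s) (inr u) by rewrite inE ext_inr /=; lia.
  have := Hconn (inr u) u v Hu' Hv'; move=> /connectP[[|w' p] /=]; first by move=> _ E; rewrite E eqxx in uv.
  case/andP=> /and3P[euw _]; rewrite inE ext_inr => Hw _ _.
  have [Hw'|Hw'] : w' = u \/ w' = v.
    case: w' euw Hw => m Hm /= _ Hle.
    have : (m = k - 2 \/ m = k - 1)%N by lia.
    by case=> E; [left|right]; apply: val_inj; rewrite /= E.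
  - by rewrite Hw' (proj1 (proj2 Htree)) in euw.
  - by rewrite -Hw'.
pose c' := (s^-1)%g c.
apply: (tree_no_cycle Htree uv euv (c := c') (Px := atoms_of (ext_component X s) (inl x))
         (Py := atoms_of (ext_component X s) (inl y))).
- apply: Hconn; rewrite inE ext_inl ?permKV ?su //.
- by rewrite inE ext_inl sv.
- apply: Hconn; rewrite inE ext_inl ?permKV ?sv //.
- by rewrite inE ext_inl su.
Qed.


Definition ptree (n : nat) (q : 'I_n.+1 -> 'I_n.+1) : rel 'I_n.+1 :=
  fun a b => ((a < b)%N && (b == q a)) || ((b < a)%N && (a == q b)).

Lemma ptree_sym n (q : 'I_n.+1 -> 'I_n.+1) : symmetric (ptree q).
Proof. by move=> a b; rewrite /ptree orbC. Qed.

Lemma ptree_conn n (q : 'I_n.+1 -> 'I_n.+1) :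
  (forall i, i != ord_max -> (i < q i)%N) ->
  forall S : {set 'I_n.+1},
  (forall c p, c \in S -> p \in S -> (c < p)%N -> q c \in S) ->
  connected_in (ptree q) S.
Proof.
move=> Hq S HS a b aS bS.
pose m := [arg max_(j > a in S) nat_of_ord j].
have [m' m'S Hmax] : extremum_spec geq (fun j => j \in S) (@nat_of_ord n.+1) m := arg_maxnP _ aS.
have toM : forall c, c \in S -> connect (restr_rel (ptree q) S) c m'.
  suff H : forall d (c : 'I_n.+1), (n - c <= d)%N -> c \in S -> connect (restr_rel (ptree q) S) c m'.
    by move=> c cS; exact: H _ c (leqnn _) cS.
  move=> d; elim: d => [|d IH] c Hd cS.
    have -> : c = m'.
      apply: ord_inj; have /= := Hmax _ cS; have := ltn_ord m'; have := ltn_ord c; lia.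
    exact: connect0.
  have [->|cm] := eqVneq c m'; first exact: connect0.
  have ltcm : (c < m')%N.
    by rewrite ltn_neqAle; apply/andP; split; [exact: cm | exact: Hmax].
  have cmax : c != ord_max by apply/eqP => E; move: ltcm; rewrite E /=; have := ltn_ord m'; lia.
  have ltq := Hq _ cmax.
  have qS := HS _ _ cS m'S ltcm.
  apply: connect_trans (connect1 _) (IH _ _ qS); last first.
    have := ltn_ord (q c); lia.
  by rewrite /restr_rel /= /ptree ltq eqxx cS qS.
apply: connect_trans (toM _ aS) _.
rewrite (sym_connect_sym _); first exact: toM.
by move=> x y; rewrite /restr_rel /= ptree_sym; case: (x \in S); case: (y \in S); rewrite ?andbF.
Qed.

Lemma ptree_tree n (q : 'I_n.+1 -> 'I_n.+1) :
  (forall i, i != ord_max -> (i < q i)%N) -> is_tree (ptree q).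
Proof.
move=> Hq; split; first exact: ptree_sym.
split; first by move=> a; rewrite /ptree ltnn.
split.
  move=> a b; have := ptree_conn Hq (S := setT) (fun _ _ _ _ _ => in_setT _) (in_setT a) (in_setT b).
  apply: connect_sub => x y /= /and3P[h _ _]; exact: connect1.
pose D := [set~ (@ord_max n)].
pose A := [set (a, q a) | a in D].
pose B := [set (q a, a) | a in D].
have E : [set p : 'I_n.+1 * 'I_n.+1 | ptree q p.1 p.2] = A :|: B.
  apply/setP => [[a b]]; rewrite !inE /ptree /=.
  apply/idP/idP.
  - case/orP => /andP[lt /eqP ->].
    + apply/orP; left; apply/imsetP; exists a => //; rewrite !inE.
      apply/eqP => E; have := ltn_ord b; move: lt; rewrite E /=; lia.
    + apply/orP; right; apply/imsetP; exists b => //; rewrite !inE.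
      apply/eqP => E; have := ltn_ord a; move: lt; rewrite E /=; lia.
  - case/orP => /imsetP[c]; rewrite !inE => Hc [-> ->]; have := Hq _ Hc => lt.
    + by rewrite lt eqxx.
    + by rewrite lt eqxx orbT.
have AB0 : A :&: B = set0.
  apply/setP => p; rewrite !inE; apply/negP => /andP[/imsetP[a Ha ->] /imsetP[b Hb [E1 E2]]].
  rewrite !inE in Ha Hb.
  have h1 := Hq _ Ha; have h2 := Hq _ Hb.
  rewrite E2 in h1; rewrite -E1 in h2.
  by have := ltn_trans h1 h2; rewrite ltnn.
have cA : #|A| = n by rewrite card_imset ?cardsC1 ?card_ord // => x y [].
have cB : #|B| = n by rewrite card_imset ?cardsC1 ?card_ord // => x y [].
have := cardsUI A B; rewrite AB0 cards0 addn0 cA cB -E => ->.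
by rewrite card_ord subn1 /= addnn.
Qed.


Lemma forward (V : finType) (k : nat) (X : 'I_k -> {set V}) :
  hierarchical X -> ext_acyclic X.
Proof.
move=> Hh s.
case: k X Hh s => [|n] X Hh s.
  exists (fun _ _ => false); split; last by move=> x [].
  split; first by [].
  split; first by [].
  split; first by move=> [].
  apply/eqP; rewrite card_ord /= -leqn0.
  by apply: leq_trans (max_card _) _; rewrite card_prod card_ord.
pose score (i p : 'I_n.+1) := if (i < p)%N then #|X (s p) :&: X (s i)|.+1 else 0%N.
pose q i := [arg max_(p > ord_max) score i p].
have Hq : forall i, i != ord_max -> (i < q i)%N.
  move=> i Hi; rewrite /q; case: arg_maxnP => // p _ Hp.
  have := Hp ord_max isT; rewrite /= /score.
  have -> : (i < @ord_max n)%N by have := ltn_ord i; move: Hi; rewrite -val_eqE /=; lia.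
  by case: ifP.
exists (ptree q); split; first exact: ptree_tree.
case=> [x|z]; apply: ptree_conn => // c p; rewrite ?at_inl ?at_inr.
- move=> xc xp cp; apply/negPn/negP => xq.
  have cq : (c < q c)%N.
    apply: Hq; apply/eqP => E; move: cp; rewrite E /=; have := ltn_ord p; lia.
  have Hpr : X (s (q c)) :&: X (s c) \proper X (s p) :&: X (s c).
    apply/properP; split; last by exists x; rewrite !inE ?xp ?xc // (negPf xq).
    apply/subsetP => y; rewrite !inE => /andP[yq yc].
    have := Hh x y; rewrite /atoms_of.
    case/or3P => [/subsetP H|/subsetP H|Hd].
    + by have := H (s p); rewrite !inE yc => ->.
    + by have := H (s (q c)); rewrite !inE yq (negPf xq) => /(_ isT).
    + have := disjointFr Hd (x := s c); rewrite !inE xc yc => /(_ isT).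
      done.
  move: cq (proper_card Hpr); rewrite /q; case: arg_maxnP => // m _ Hm cm.
  have := Hm p isT; rewrite /= /score cp cm; lia.
- move=> zc zp cp.
  have cq : (c < q c)%N.
    apply: Hq; apply/eqP => E; move: cp; rewrite E /=; have := ltn_ord p; lia.
  lia.
Qed.


Theorem mainTheorem7 (V : finType) (k : nat) (X : 'I_k -> {set V}) :
  hierarchical X <-> ext_acyclic X.
Proof. split; [exact: forward | exact: backward]. Qed.
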